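(* Let $p/q$ be a rational number. For real $\varepsilon\neq0$ small, let $z_\varepsilon$ be a point of $\mathcal C_{p/q}(p/q+\varepsilon)$ and $Q_\varepsilon(w)=\frac{1}{z_\varepsilon}P_{p/q+\varepsilon}(z_\varepsilon w)$. Then $$Q_\varepsilon^{\circ q}(w)=w+2i\pi q\varepsilon\, w(1-w^q)+\varepsilon R_\varepsilon(w),$$ where $R_\varepsilon\to0$ uniformly on compact subsets of $\mathbb C$ as $\varepsilon\to0$.
   Context: $P_\alpha(z)=e^{2i\pi\alpha}z+z^2$. The cycle $\mathcal C_{p/q}(\alpha)$: with $\zeta=e^{2i\pi p/q}$ there is an analytic $\chi_{p/q}:B(0,q^{-3/q})\to\mathbb C$, $\chi_{p/q}(0)=0$, such that for $\delta\ne0$, $\chi_{p/q}(\delta)\neq0$ and $\{\chi_{p/q}(\zeta^k\delta)\}_{0\le k<q}$ is a cycle of period $q$ of $P_{p/q+\delta^q}$; $\mathcal C_{p/q}(\alpha)=\chi_{p/q}(\{\delta:\delta^q=\alpha-p/q\})$ for $|\alpha-p/q|<1/q^3$. *)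

(* Defs.v *)
From Stdlib Require Import Reals ZArith.
From Coquelicot Require Import Coquelicot.
Open Scope R_scope.

Definition cexp (z : C) : C :=
  (exp (fst z) * cos (snd z), exp (fst z) * sin (snd z)).

(* P_alpha(z) = e^{2 i pi alpha} z + z^2 (alpha complex, needed for alpha = p/q + delta^q) *)
Definition Pmap (alpha : C) (z : C) : C :=
  Cplus (Cmult (cexp (Cmult (Cmult (RtoC (2 * PI)) Ci) alpha)) z) (Cmult z z).

Definition zeta (p : Z) (q : nat) : C :=
  cexp (Cmult (Cmult (RtoC (2 * PI)) Ci) (RtoC (IZR p / INR q))).

Definition chi_radius (q : nat) : R := Rpower (INR q) (- (3 / INR q)).

(* chi is a parametrisation chi_{p/q} as in the context: analytic (complex
   differentiable) on B(0, q^{-3/q}), chi(0)=0, and for delta <> 0 in the ball,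
   chi(delta) <> 0 and (chi(zeta^k delta))_{0<=k<q} is a cycle of exact period q
   of P_{p/q + delta^q}. *)
Definition is_chi (p : Z) (q : nat) (chi : C -> C) : Prop :=
  (forall d : C, Cmod d < chi_radius q ->
     ex_derive (K := C_AbsRing) (V := C_NormedModule) chi d) /\
  chi (RtoC 0) = RtoC 0 /\
  (forall d : C, 0 < Cmod d < chi_radius q ->
     chi d <> RtoC 0 /\
     (forall k : nat, (k < q)%nat ->
        Pmap (Cplus (RtoC (IZR p / INR q)) (Cpow d q))
             (chi (Cmult (Cpow (zeta p q) k) d))
        = chi (Cmult (Cpow (zeta p q) (S k)) d)) /\
     (forall i j : nat, (i < q)%nat -> (j < q)%nat ->
        chi (Cmult (Cpow (zeta p q) i) d) = chi (Cmult (Cpow (zeta p q) j) d) ->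
        i = j)).

Definition cycle_set (p : Z) (q : nat) (chi : C -> C) (alpha : R) (z : C) : Prop :=
  exists d : C, Cmod d < chi_radius q /\
    Cpow d q = RtoC (alpha - IZR p / INR q) /\ z = chi d.

Definition Qmap (p : Z) (q : nat) (eps : R) (z : C) (w : C) : C :=
  Cmult (Cinv z) (Pmap (RtoC (IZR p / INR q + eps)) (Cmult z w)).

(* R_eps(w), defined by Q_eps^q(w) = w + 2 i pi q eps w (1 - w^q) + eps R_eps(w) *)
Definition Rrem (p : Z) (q : nat) (eps : R) (z : C) (w : C) : C :=
  Cdiv (Cminus (Cminus (Nat.iter q (Qmap p q eps z) w) w)
               (Cmult (Cmult (Cmult (RtoC (2 * PI * INR q * eps)) Ci) w)
                      (Cminus (RtoC 1) (Cpow w q))))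
       (RtoC eps).

(* Main.v *)
Require Import Defs.
From Stdlib Require Import Reals ZArith.
From Coquelicot Require Import Coquelicot.
Open Scope R_scope.
From Stdlib Require Import Lia Lra.

Section Alg.
Local Open Scope C_scope.
Implicit Types u l c : C.

Fixpoint PolyN (n : nat) (f : C -> C) : Prop :=
  match n with
  | O => forall u, f u = 0
  | S n => exists c g, PolyN n g /\ forall u, f u = c + u * g u
  end.
Definition Poly f := exists n, PolyN n f.

Lemma PolyN_ext n f g : PolyN n f -> (forall u, g u = f u) -> PolyN n g.
Proof.
  revert f g; induction n as [|n IH]; simpl; intros f g H E.
  - intros u; rewrite E; auto.
  - destruct H as [c [h [Hh Hf]]]. exists c, h; split; auto.
    intros u; rewrite E; auto.
Qed.

Lemma Poly_ext f g : Poly f -> (forall u, g u = f u) -> Poly g.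
Proof. intros [n H] E; exists n; eapply PolyN_ext; eauto. Qed.

Lemma PolyN_S n f : PolyN n f -> PolyN (S n) f.
Proof.
  revert f; induction n as [|n IH]; simpl; intros f H.
  - exists (f 0), (fun _ => 0). split. { intros; reflexivity. }
    intros u. rewrite (H u), (H 0). ring.
  - destruct H as [c [g [Hg Hf]]]. exists c, g; split; [apply IH|]; auto.
Qed.

Lemma PolyN_le n m f : (n <= m)%nat -> PolyN n f -> PolyN m f.
Proof. induction 1; auto. intros; apply PolyN_S; auto. Qed.

Lemma Poly_const c : Poly (fun _ => c).
Proof. exists 1%nat. simpl. exists c, (fun _ => 0). split; [simpl; intros; reflexivity|]. intros; ring. Qed.

Lemma Poly_id : Poly (fun u => u).
Proof. exists 2%nat. simpl. exists 0, (fun _ => 1). split.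
  exists 1, (fun _ => 0). split; [simpl; intros; reflexivity|]. intros; ring.
  intros; ring. Qed.

Lemma Poly_decomp f : Poly f -> exists c g, Poly g /\ forall u, f u = c + u * g u.
Proof.
  intros [[|n] H].
  - exists 0, (fun _ => 0); split; [apply Poly_const|]. intros u; simpl in H; rewrite H; ring.
  - destruct H as [c [g [Hg Hf]]]. exists c, g; split; [exists n; auto|auto].
Qed.

Lemma PolyN_add n f g : PolyN n f -> PolyN n g -> PolyN n (fun u => f u + g u).
Proof.
  revert f g; induction n as [|n IH]; simpl; intros f g Hf Hg.
  - intros u; rewrite Hf, Hg; ring.
  - destruct Hf as [c [f1 [Hf1 Ef]]]; destruct Hg as [d [g1 [Hg1 Eg]]].
    exists (c + d), (fun u => f1 u + g1 u); split; auto.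
    intros u; rewrite Ef, Eg; ring.
Qed.

Lemma Poly_add f g : Poly f -> Poly g -> Poly (fun u => f u + g u).
Proof.
  intros [n Hf] [m Hg]. exists (max n m). apply PolyN_add.
  - apply (PolyN_le n); auto; lia.
  - apply (PolyN_le m); auto; lia.
Qed.

Lemma Poly_scal c f : Poly f -> Poly (fun u => c * f u).
Proof.
  intros [n Hf]; exists n; revert f Hf; induction n as [|n IH]; simpl; intros f Hf.
  - intros u; rewrite Hf; ring.
  - destruct Hf as [d [g [Hg Ef]]]. exists (c * d), (fun u => c * g u); split; auto.
    intros u; rewrite Ef; ring.
Qed.

Lemma Poly_X f : Poly f -> Poly (fun u => u * f u).
Proof.
  intros [n Hf]; exists (S n); simpl. exists 0, f; split; auto. intros; ring.
Qed.

Lemma Poly_mul f g : Poly f -> Poly g -> Poly (fun u => f u * g u).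
Proof.
  intros [n Hf] Hg; revert f Hf; induction n as [|n IH]; simpl; intros f Hf.
  - eapply Poly_ext; [apply (Poly_const 0)|]. intros u; simpl; rewrite Hf; ring.
  - destruct Hf as [c [f1 [Hf1 Ef]]].
    eapply Poly_ext; [apply Poly_add; [apply (Poly_scal c g Hg)| apply Poly_X; apply (IH f1 Hf1)]|].
    intros u; simpl; rewrite Ef; ring.
Qed.

Lemma Poly_comp f h : Poly f -> Poly h -> Poly (fun u => f (h u)).
Proof.
  intros [n Hf] Hh; revert f Hf; induction n as [|n IH]; simpl; intros f Hf.
  - eapply Poly_ext; [apply (Poly_const 0)|]. intros u; simpl; rewrite Hf; ring.
  - destruct Hf as [c [f1 [Hf1 Ef]]].
    eapply Poly_ext; [apply Poly_add; [apply (Poly_const c)| apply Poly_mul; [exact Hh| apply (IH f1 Hf1)]]|].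
    intros u; simpl; rewrite Ef; ring.
Qed.

Lemma Poly_pow f j : Poly f -> Poly (fun u => Cpow (f u) j).
Proof.
  intros Hf; induction j as [|j IH]; simpl.
  - apply Poly_const.
  - apply Poly_mul; auto.
Qed.

Lemma Poly_bounded f : Poly f -> forall R, exists M, 0 <= M /\
  forall u, Cmod u <= R -> Cmod (f u) <= M.
Proof.
  intros [n Hf] R; revert f Hf; induction n as [|n IH]; simpl; intros f Hf.
  - exists 0%R; split; [lra|]. intros u _; rewrite Hf, Cmod_0; lra.
  - destruct Hf as [c [g [Hg Ef]]]. destruct (IH g Hg) as [M [HM0 HM]].
    exists (Cmod c + Rabs R * M)%R; split.
    + pose proof (Cmod_ge_0 c); pose proof (Rabs_pos R); nra.
    + intros u Hu. rewrite Ef. eapply Rle_trans; [apply Cmod_triangle|].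
      rewrite Cmod_mult. apply Rplus_le_compat_l.
      pose proof (HM u Hu). pose proof (Cmod_ge_0 u). pose proof (Cmod_ge_0 (g u)).
      pose proof (Rle_abs R). nra.
Qed.


Lemma Poly_sub f g : Poly f -> Poly g -> Poly (fun u => f u - g u).
Proof.
  intros Hf Hg. eapply Poly_ext; [apply (Poly_add _ _ Hf (Poly_scal (-1) g Hg))|].
  intros u; simpl; ring.
Qed.

Lemma Cpow_neq0 (u : C) (j : nat) : u <> 0 -> Cpow u j <> 0.
Proof. apply Cpow_nz. Qed.

Lemma Cmult_eq0 (a b : C) : a * b = 0 -> a <> 0 -> b = 0.
Proof. intros E Ha. destruct (Ceq_dec b 0) as [H|H]; auto.
  exfalso; apply (Cmult_neq_0 a b Ha H E). Qed.

Lemma Poly_zero_at_0 F : Poly F -> (forall u, u <> 0 -> F u = 0) -> F 0 = 0.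
Proof.
  intros HF HZ. destruct (Poly_decomp F HF) as [c [g [Hg E]]].
  destruct (Poly_bounded g Hg 1%R) as [M [HM0 HM]].
  assert (F0 : F 0 = c) by (rewrite E; ring). rewrite F0.
  destruct (Req_dec (Cmod c) 0) as [Hc|Hc]; [apply Cmod_eq_0; auto|].
  exfalso. pose proof (Cmod_ge_0 c) as Hc0.
  set (t := Rmin 1 (Cmod c / (2 * (M + 1)))).
  assert (Ht0 : (0 < t)%R). { unfold t. apply Rmin_glb_lt; [lra|].
    apply Rdiv_lt_0_compat; lra. }
  assert (Ht1 : (t <= 1)%R) by (unfold t; apply Rmin_l).
  assert (Ht2 : (t <= Cmod c / (2 * (M + 1)))%R) by (unfold t; apply Rmin_r).
  assert (Hu : RtoC t <> 0). { intros H. apply (f_equal Cmod) in H.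
    rewrite Cmod_R, Cmod_0, Rabs_pos_eq in H; lra. }
  pose proof (HZ _ Hu) as H. rewrite E in H.
  assert (Hc' : c = - (RtoC t * g t)).
  { transitivity ((c + RtoC t * g t) - RtoC t * g t); [ring|]. rewrite H; ring. }
  assert (Cmod (g t) <= M)%R by (apply HM; rewrite Cmod_R, Rabs_pos_eq; lra).
  rewrite Hc', Cmod_opp, Cmod_mult, Cmod_R, Rabs_pos_eq in Hc0, Hc; try lra.
  rewrite Hc', Cmod_opp, Cmod_mult, Cmod_R, Rabs_pos_eq in Ht2; try lra.
  pose proof (Cmod_ge_0 (g t)).
  assert (t * Cmod (g t) <= t * M)%R by (apply Rmult_le_compat_l; lra).
  apply Rle_div_r in Ht2; [|lra]. nra.
Qed.

Definition fl (l u : C) := l * u + u * u.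
Fixpoint V (k : nat) (l u : C) : C :=
  match k with
  | O => 0
  | S k => l * V k l u + (Cpow l k + u * V k l u) * (Cpow l k + u * V k l u)
  end.

Lemma T_V (k : nat) (l u : C) : Nat.iter k (fl l) u = Cpow l k * u + u * u * V k l u.
Proof. induction k as [|k IH]; simpl. - ring. - rewrite IH; unfold fl; ring. Qed.

Lemma Poly_V (k : nat) (l : C) : Poly (V k l).
Proof.
  induction k as [|k IH]; simpl.
  - apply (Poly_const 0).
  - eapply Poly_ext. apply Poly_add. apply (Poly_scal l _ IH).
    apply Poly_mul; (apply Poly_add; [apply (Poly_const (Cpow l k))| apply Poly_X; exact IH]).
    intros u; simpl; reflexivity.
Qed.

Lemma alg_main (q : nat) (l : C) : l <> 0 -> Cpow l q = 1 ->
  (forall m, (0 < m < q)%nat -> Cpow l m <> 1) ->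
  forall j, (j < q)%nat -> exists W, Poly W /\ forall u, V q l u = Cpow u j * W u.
Proof.
  intros Hl Hq Hprim j. induction j as [|j IH]; intros Hj.
  - exists (V q l); split; [apply Poly_V|]. intros u; simpl; ring.
  - destruct IH as [W [HW EW]]; [lia|].
    set (F := fun u => l * W u + 2 * u * W u + u * u * Cpow u j * (W u * W u)
       - (l + u) * (l + u) * Cpow (l + u) j * W (l * u + u * u)).
    assert (HF : Poly F).
    { unfold F. apply Poly_sub. apply Poly_add. apply Poly_add.
      apply (Poly_scal l _ HW).
      apply Poly_mul; [apply Poly_scal, Poly_id| exact HW].
      apply Poly_mul. apply Poly_mul. apply Poly_mul; apply Poly_id.
      apply (Poly_pow _ j Poly_id). apply Poly_mul; exact HW.
      apply Poly_mul. apply Poly_mul. apply Poly_mul; (apply Poly_add; [apply (Poly_const l)| apply Poly_id]).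
      apply (Poly_pow (fun u => l + u)); (apply Poly_add; [apply (Poly_const l)| apply Poly_id]).
      apply (Poly_comp W (fun u => l * u + u * u)); auto.
      apply Poly_add. apply Poly_scal, Poly_id. apply Poly_mul; apply Poly_id. }
    assert (HZ : forall u, u <> 0 -> F u = 0).
    { intros u Hu.
      pose proof (Nat.iter_swap q C (fl l) u) as E.
      rewrite !T_V, Hq in E. rewrite !EW in E.
      assert (Efl : fl l u = u * (l + u)) by (unfold fl; ring).
      assert (Hp : fl l u ^ j = u ^ j * (l + u) ^ j) by (rewrite Efl; apply Cpow_mult_l).
      rewrite Hp in E. unfold fl in E.
      assert (K : u * u * u ^ j * F u =
        (l * (1 * u + u * u * (u ^ j * W u)) + (1 * u + u * u * (u ^ j * W u)) * (1 * u + u * u * (u ^ j * W u)))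
        - (1 * (l * u + u * u) + (l * u + u * u) * (l * u + u * u) * (u ^ j * (l + u) ^ j * W (l * u + u * u)))).
      { unfold F. ring. }
      rewrite E in K. replace (_ - _) with (RtoC 0) in K by ring.
      assert (Hu2 : u * u * Cpow u j <> 0).
      { apply Cmult_neq_0; [apply Cmult_neq_0|apply Cpow_neq0]; auto. }
      exact (Cmult_eq0 _ _ K Hu2). }
    pose proof (Poly_zero_at_0 F HF HZ) as F0.
    assert (F0' : F 0 = l * W 0 * (1 - Cpow l (S j))).
    { unfold F. replace (l * 0 + 0 * 0) with (RtoC 0) by ring. rewrite Cpow_S, Cplus_0_r. ring. }
    rewrite F0 in F0'. symmetry in F0'.
    assert (HW0 : W 0 = 0).
    { apply Cmult_eq0 with (l * (1 - Cpow l (S j))).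
      transitivity (l * W 0 * (1 - Cpow l (S j))); [ring| exact F0'].
      apply Cmult_neq_0; auto. apply Cminus_eq_contra. intros H. symmetry in H.
      apply (Hprim (S j)); auto; lia. }
    destruct (Poly_decomp W HW) as [c [g [Hg Eg]]].
    assert (c = 0) by (rewrite <- HW0, Eg; ring). subst c.
    exists g; split; auto. intros u. rewrite EW, Eg, Cpow_S. ring.
Qed.

End Alg.

Section Ana.
Local Open Scope C_scope.
Implicit Types u l c : C.

Definition BL (f : C -> C -> C) := exists M L, (0 <= M)%R /\ (0 <= L)%R /\
  forall l l' u, (Cmod l <= 1)%R -> (Cmod l' <= 1)%R -> (Cmod u <= 1)%R ->
   (Cmod (f l u) <= M)%R /\ (Cmod (f l u - f l' u) <= L * Cmod (l - l'))%R.

Lemma BL_ext f g : BL f -> (forall l u, g l u = f l u) -> BL g.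
Proof. intros [M [L [H0 [H1 H]]]] E. exists M, L; split; auto; split; auto.
  intros; rewrite !E; auto. Qed.

Lemma BL_const c : BL (fun _ _ => c).
Proof. exists (Cmod c), 0%R. split; [apply Cmod_ge_0|split; [lra|]].
  intros; split; [lra|]. replace (c - c) with (RtoC 0) by ring. rewrite Cmod_0. 
  pose proof (Cmod_ge_0 (l - l')). nra. Qed.

Lemma BL_l : BL (fun l _ => l).
Proof. exists 1%R, 1%R. split; [lra|split; [lra|]]. intros; split; auto; lra. Qed.

Lemma BL_u : BL (fun _ u => u).
Proof. exists 1%R, 0%R. split; [lra|split; [lra|]]. intros; split; auto.
  replace (u - u) with (RtoC 0) by ring. rewrite Cmod_0. 
  pose proof (Cmod_ge_0 (l - l')). nra. Qed.

Lemma Cmod_sub_le a b : (Cmod (a - b) <= Cmod a + Cmod b)%R.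
Proof. unfold Cminus. eapply Rle_trans; [apply Cmod_triangle|]. rewrite Cmod_opp; lra. Qed.

Lemma BL_add f g : BL f -> BL g -> BL (fun l u => f l u + g l u).
Proof.
  intros [M1 [L1 [H10 [H11 H1]]]] [M2 [L2 [H20 [H21 H2]]]].
  exists (M1 + M2)%R, (L1 + L2)%R. split; [lra|split; [lra|]].
  intros l l' u Hl Hl' Hu. destruct (H1 l l' u Hl Hl' Hu) as [A B].
  destruct (H2 l l' u Hl Hl' Hu) as [C0 D]. split.
  - eapply Rle_trans; [apply Cmod_triangle|lra].
  - replace (f l u + g l u - (f l' u + g l' u)) with ((f l u - f l' u) + (g l u - g l' u)) by ring.
    eapply Rle_trans; [apply Cmod_triangle|]. pose proof (Cmod_ge_0 (l - l')). nra.
Qed.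

Lemma BL_mul f g : BL f -> BL g -> BL (fun l u => f l u * g l u).
Proof.
  intros [M1 [L1 [H10 [H11 H1]]]] [M2 [L2 [H20 [H21 H2]]]].
  exists (M1 * M2)%R, (M1 * L2 + L1 * M2)%R. split; [nra|split; [nra|]].
  intros l l' u Hl Hl' Hu. destruct (H1 l l' u Hl Hl' Hu) as [A B].
  destruct (H2 l l' u Hl Hl' Hu) as [C0 D].
  destruct (H2 l' l' u Hl' Hl' Hu) as [C1 _]. split.
  - rewrite Cmod_mult. pose proof (Cmod_ge_0 (f l u)). pose proof (Cmod_ge_0 (g l u)). nra.
  - replace (f l u * g l u - f l' u * g l' u) with (f l u * (g l u - g l' u) + (f l u - f l' u) * g l' u) by ring.
    eapply Rle_trans; [apply Cmod_triangle|]. rewrite !Cmod_mult.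
    pose proof (Cmod_ge_0 (l - l')). pose proof (Cmod_ge_0 (f l u)).
    pose proof (Cmod_ge_0 (g l' u)). pose proof (Cmod_ge_0 (g l u - g l' u)).
    pose proof (Cmod_ge_0 (f l u - f l' u)).
    assert (Cmod (f l u) * Cmod (g l u - g l' u) <= M1 * (L2 * Cmod (l - l')))%R by (apply Rmult_le_compat; auto).
    assert (Cmod (f l u - f l' u) * Cmod (g l' u) <= (L1 * Cmod (l - l')) * M2)%R by (apply Rmult_le_compat; auto).
    nra.
Qed.

Lemma BL_pow k : BL (fun l _ => Cpow l k).
Proof. induction k; simpl. apply (BL_const 1). apply (BL_mul (fun l _ => l) _ BL_l IHk). Qed.

Lemma BL_V k : BL (V k).
Proof.
  induction k as [|k IH]; simpl.
  - apply (BL_const 0).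
  - apply BL_add. apply (BL_mul (fun l _ => l)); [apply BL_l| exact IH].
    assert (H : BL (fun l u => Cpow l k + u * V k l u)).
    { apply BL_add; [apply BL_pow| apply (BL_mul (fun _ u => u)); [apply BL_u|exact IH]]. }
    exact (BL_mul _ _ H H).
Qed.

End Ana.
Definition E (t : R) : C := (cos t, sin t).

Lemma cexp_iR r a : cexp (Cmult (Cmult (RtoC r) Ci) (RtoC a)) = E (r * a).
Proof.
  unfold cexp, E, Cmult, RtoC, Ci; simpl.
  replace ((r * 0 - 0 * 1) * a - (r * 1 + 0 * 0) * 0)%R with 0%R by ring.
  replace ((r * 0 - 0 * 1) * 0 + (r * 1 + 0 * 0) * a)%R with (r * a)%R by ring.
  rewrite exp_0, !Rmult_1_l. reflexivity.
Qed.

Lemma E_mul s t : Cmult (E s) (E t) = E (s + t).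
Proof. unfold E, Cmult; simpl. rewrite cos_plus, sin_plus. f_equal; ring. Qed.

Lemma E_0 : E 0 = RtoC 1.
Proof. unfold E, RtoC. rewrite cos_0, sin_0. reflexivity. Qed.

Lemma E_pow t n : Cpow (E t) n = E (INR n * t).
Proof. induction n as [|n IH]; simpl Cpow.
  - rewrite Rmult_0_l, E_0; reflexivity.
  - rewrite IH, E_mul, S_INR. f_equal; ring. Qed.

Lemma E_2piN n : E (2 * PI * INR n) = RtoC 1.
Proof. unfold E, RtoC. pose proof (cos_period 0 n) as H1. pose proof (sin_period 0 n) as H2.
  rewrite Rplus_0_l, cos_0 in H1. rewrite Rplus_0_l, sin_0 in H2.
  replace (2 * PI * INR n)%R with (2 * INR n * PI)%R by ring. rewrite H1, H2; reflexivity. Qed.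

Lemma E_2piZ k : E (2 * PI * IZR k) = RtoC 1.
Proof.
  destruct (Z_le_gt_dec 0 k) as [H|H].
  - rewrite <- (Z2Nat.id k H), <- INR_IZR_INZ. apply E_2piN.
  - replace k with (- Z.of_nat (Z.to_nat (- k)))%Z by lia.
    rewrite opp_IZR, <- INR_IZR_INZ. pose proof (E_2piN (Z.to_nat (-k))) as H1.
    unfold E, RtoC in *. injection H1; intros A B.
    replace (2 * PI * - INR (Z.to_nat (- k)))%R with (- (2 * PI * INR (Z.to_nat (- k))))%R by ring.
    rewrite cos_neg, sin_neg, A, B. f_equal; ring.
Qed.

Lemma Cmod_E t : Cmod (E t) = 1%R.
Proof. unfold Cmod, E; simpl. rewrite !Rmult_1_r.
  replace (cos t * cos t + sin t * sin t)%R with 1%R. apply sqrt_1.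
  pose proof (sin2_cos2 t). unfold Rsqr in H. lra. Qed.

Lemma Cmod_le_abs (a b : R) : (Cmod (a, b) <= Rabs a + Rabs b)%R.
Proof.
  unfold Cmod; simpl. rewrite <- (sqrt_Rsqr (Rabs a + Rabs b)).
  2: pose proof (Rabs_pos a); pose proof (Rabs_pos b); lra.
  apply sqrt_le_1_alt. unfold Rsqr. rewrite !Rmult_1_r.
  pose proof (Rabs_pos a); pose proof (Rabs_pos b).
  pose proof (Rsqr_abs a); pose proof (Rsqr_abs b). unfold Rsqr in *.
  nra.
Qed.

Lemma abs_le_inv t b : (Rabs t <= b -> - b <= t <= b)%R.
Proof. unfold Rabs; destruct Rcase_abs; lra. Qed.

Lemma cos_bnd t : (Rabs t <= 1 -> Rabs (cos t - 1) <= t * t / 2)%R.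
Proof.
  intros Ht. pose proof (pre_cos_bound t 0) as H. simpl in H.
  assert (Hc : (cos_approx t 1 = 1 - t * t / 2)%R) by (unfold cos_approx, cos_term; simpl; field).
  rewrite Hc in H. pose proof (COS_bound t). apply abs_le_inv in Ht.
  destruct H; try lra. rewrite Rabs_left1; lra.
Qed.

Lemma sin_bnd_pos t : (0 <= t <= 1 -> Rabs (sin t - t) <= t * t)%R.
Proof.
  intros Ht. pose proof (pre_sin_bound t 0) as H. simpl in H.
  assert (H1 : (sin_approx t 1 = t - t * t * t / 6)%R) by (unfold sin_approx, sin_term; simpl; field).
  assert (H2 : (sin_approx t 2 = t - t * t * t / 6 + t * t * t * t * t / 120)%R) by (unfold sin_approx, sin_term; simpl; field).
  rewrite H1, H2 in H. destruct H; try lra.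
  assert (A1 : (0 <= t * t)%R) by nra. assert (A2 : (0 <= t * t * t)%R) by nra.
  assert (A3 : (t * t * t <= t * t)%R) by nra. assert (A4 : (t * t * t * t * t <= t * t * t)%R) by nra.
  apply Rabs_le. split; lra.
Qed.

Lemma sin_bnd t : (Rabs t <= 1 -> Rabs (sin t - t) <= t * t)%R.
Proof.
  intros Ht. destruct (Rle_dec 0 t).
  - apply sin_bnd_pos. apply abs_le_inv in Ht; lra.
  - pose proof (sin_bnd_pos (- t)) as H. rewrite sin_neg in H.
    replace (- sin t - - t)%R with (- (sin t - t))%R in H by ring.
    rewrite Rabs_Ropp in H. rewrite Rabs_left in Ht by lra. nra.
Qed.

Lemma E_bound2 t : (Rabs t <= 1)%R -> (Cmod (Cminus (Cminus (E t) (RtoC 1)) (Cmult (RtoC t) Ci)) <= 2 * (t * t))%R.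
Proof.
  intros Ht. replace (Cminus (Cminus (E t) (RtoC 1)) (Cmult (RtoC t) Ci)) with ((cos t - 1)%R, (sin t - t)%R).
  2: { unfold E, Cminus, Cplus, Copp, Cmult, RtoC, Ci; simpl. f_equal; ring. }
  eapply Rle_trans; [apply Cmod_le_abs|]. pose proof (cos_bnd t Ht). pose proof (sin_bnd t Ht). nra.
Qed.

Lemma E_bound1 t : (Rabs t <= 1)%R -> (Cmod (Cminus (E t) (RtoC 1)) <= 3 * Rabs t)%R.
Proof.
  intros Ht. replace (Cminus (E t) (RtoC 1)) with ((cos t - 1)%R, (sin t - t + t)%R).
  2: { unfold E, Cminus, Cplus, Copp, RtoC; simpl. f_equal; ring. }
  eapply Rle_trans; [apply Cmod_le_abs|]. pose proof (cos_bnd t Ht). pose proof (sin_bnd t Ht).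
  pose proof (Rabs_triang (sin t - t) t).
  assert (Htt : (t * t <= Rabs t)%R). { rewrite <- (Rabs_pos_eq (t*t)) by nra. rewrite Rabs_mult.
    pose proof (Rabs_pos t). nra. }
  pose proof (Rabs_pos t). lra.
Qed.
Lemma deriv_bound (f : C -> C) :
  ex_derive (K := C_AbsRing) (V := C_NormedModule) f (RtoC 0) -> f (RtoC 0) = RtoC 0 ->
  exists del Cd, (0 < del)%R /\ (0 <= Cd)%R /\
    forall d, (Cmod d < del)%R -> (Cmod (f d) <= Cd * Cmod d)%R.
Proof.
  intros [l [_ Hd]] H0.
  specialize (Hd (RtoC 0) (fun P H => H)).
  specialize (Hd (mkposreal 1 Rlt_0_1)). simpl in Hd.
  destruct Hd as [e He].
  exists e, (1 + Cmod l)%R. split; [apply cond_pos|split; [pose proof (Cmod_ge_0 l); lra|]].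
  intros d Hdl.
  assert (Hb : @ball (AbsRing_UniformSpace C_AbsRing) (RtoC 0) e d).
  { change (Cmod (Cminus d (RtoC 0)) < e)%R. replace (Cminus d (RtoC 0)) with d by ring. exact Hdl. }
  specialize (He d Hb).
  change (Cmod (Cminus (Cminus (f d) (f (RtoC 0))) (Cmult (Cminus d (RtoC 0)) l)) <= 1 * Cmod (Cminus d (RtoC 0)))%R in He.
  rewrite H0 in He. replace (Cminus d (RtoC 0)) with d in He by ring.
  replace (f d) with (Cplus (Cminus (Cminus (f d) (RtoC 0)) (Cmult d l)) (Cmult d l)) by ring.
  eapply Rle_trans; [apply Cmod_triangle|]. rewrite Cmod_mult. nra.
Qed.

Lemma Q_iter p q eps z w n : z <> RtoC 0 ->
  Nat.iter n (Qmap p q eps z) w =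
  Cmult (Cinv z) (Nat.iter n (Pmap (RtoC (IZR p / INR q + eps))) (Cmult z w)).
Proof.
  intros Hz. induction n as [|n IH]; simpl.
  - field; auto.
  - rewrite IH. unfold Qmap at 1. f_equal. f_equal. field; auto.
Qed.

Lemma cycle_iter p q chi d :
  (forall k : nat, (k < q)%nat ->
        Pmap (Cplus (RtoC (IZR p / INR q)) (Cpow d q))
             (chi (Cmult (Cpow (zeta p q) k) d))
        = chi (Cmult (Cpow (zeta p q) (S k)) d)) ->
  forall k, (k <= q)%nat ->
  Nat.iter k (Pmap (Cplus (RtoC (IZR p / INR q)) (Cpow d q))) (chi d) = chi (Cmult (Cpow (zeta p q) k) d).
Proof.
  intros H k Hk. induction k as [|k IH]; simpl.
  - f_equal. ring.
  - rewrite IH by lia. apply H. lia.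
Qed.

Lemma core_identity (q' : nat) (L I z w A B A0 B0 rzw rz : C) :
  z <> RtoC 0 -> Cplus (Cmult L z) (Cmult (Cmult z z) B) = z ->
  A0 = Cmult (Cmult (Cpow z q') (Cpow w q')) rzw -> B0 = Cmult (Cpow z q') rz ->
  (L * w + z * w * w * A - w - I * w * (1 - w * Cpow w q') =
  (L - 1 - I) * (w - w * w * Cpow w q') + z * Cpow z q' * (w * w * Cpow w q') * (rzw - rz)
   + z * (w * w * (A - A0) - w * w * Cpow w q' * (B - B0)))%C.
Proof.
  intros Hz Hc HA HB.
  assert (K0 : (L - 1 + z * B = 0)%C).
  { apply (Cmult_eq0 z); auto. transitivity ((L * z + z * z * B) - z)%C; [ring|]. rewrite Hc; ring. }
  subst A0 B0.
  transitivity ((L - 1 - I) * (w - w * w * Cpow w q') + z * Cpow z q' * (w * w * Cpow w q') * (rzw - rz)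
   + z * (w * w * (A - Cpow z q' * Cpow w q' * rzw) - w * w * Cpow w q' * (B - Cpow z q' * rz))
   + w * w * Cpow w q' * (L - 1 + z * B))%C; [ring|]. rewrite K0; ring.
Qed.

Lemma pow_lt_inv (a b : R) n : (0 <= a)%R -> (0 <= b)%R -> (a ^ n < b ^ n)%R -> (a < b)%R.
Proof. intros Ha Hb H. destruct (Rlt_le_dec a b); auto.
  exfalso. assert (b ^ n <= a ^ n)%R by (apply pow_incr; lra). lra. Qed.

Lemma pow_le_one' (x : R) n : (0 <= x <= 1)%R -> (x ^ n <= 1)%R.
Proof. intros H. induction n; simpl; [lra|]. nra. Qed.

Lemma Cmod_wpow (w : C) (R : R) n : Cmod w <= R -> Cmod (Cmult (Cmult w w) (Cpow w n)) <= R ^ (S (S n)).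
Proof.
  intros H. rewrite !Cmod_mult, Cmod_pow. pose proof (Cmod_ge_0 w).
  simpl. rewrite <- Rmult_assoc. apply Rmult_le_compat.
  - nra.
  - apply pow_le; lra.
  - apply Rmult_le_compat; lra.
  - apply pow_incr; lra.
Qed.

Theorem lemma5 (p : Z) (q : nat) (chi : C -> C) :
  (0 < q)%nat -> Z.gcd p (Z.of_nat q) = 1%Z -> is_chi p q chi ->
  forall rad : R, 0 < rad ->
  forall eta : R, 0 < eta ->
  exists eps0 : R, 0 < eps0 /\
    forall eps : R, eps <> 0 -> Rabs eps < eps0 ->
    forall z : C, cycle_set p q chi (IZR p / INR q + eps) z ->
    forall w : C, Cmod w <= rad ->
      Cmod (Rrem p q eps z w) < eta.
Proof.
  intros Hq _ [Hder [H0 Hcyc]] rad Hrad eta Heta.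
  destruct q as [|q']; [lia|].
  set (r0 := chi_radius (S q')).
  assert (Hr0 : 0 < r0) by (unfold r0, chi_radius, Rpower; apply exp_pos).
  set (l0 := zeta p (S q')).
  assert (HINR : INR (S q') <> 0) by (apply not_0_INR; lia).
  assert (El0 : l0 = E (2 * PI * (IZR p / INR (S q')))) by (unfold l0, zeta; apply cexp_iR).
  assert (Hl0q : Cpow l0 (S q') = RtoC 1).
  { rewrite El0, E_pow.
    replace (INR (S q') * (2 * PI * (IZR p / INR (S q'))))%R with (2 * PI * IZR p)%R by (field; auto).
    apply E_2piZ. }
  assert (Hl0m : Cmod l0 = 1) by (rewrite El0; apply Cmod_E).
  assert (Hl0nz : l0 <> RtoC 0) by (intro H; rewrite H, Cmod_0 in Hl0m; lra).
  assert (Hprim : forall m, (0 < m < S q')%nat -> Cpow l0 m <> RtoC 1).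
  { intros m Hm Hc. set (d1 := RtoC (r0 / 2)).
    assert (Hd1 : 0 < Cmod d1 < r0) by (unfold d1; rewrite Cmod_R, Rabs_pos_eq; lra).
    destruct (Hcyc d1 Hd1) as [_ [_ Hinj]].
    assert (m = 0)%nat; [|lia].
    apply (Hinj m 0%nat); try lia. fold l0. rewrite Hc. reflexivity. }
  destruct (alg_main (S q') l0 Hl0nz Hl0q Hprim q' (Nat.lt_succ_diag_r q')) as [r [Hr Er]].
  destruct (Poly_decomp r Hr) as [c [g [Hg Eg]]].
  set (Rr := (rad + 1)%R).
  destruct (Poly_bounded g Hg 1) as [Mg [HMg0 HMg]].
  destruct (BL_V (S q')) as [MV [LV [HMV0 [HLV0 HV]]]].
  assert (Hd0 : Cmod (RtoC 0) < r0) by (rewrite Cmod_0; lra).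
  destruct (deriv_bound chi (Hder _ Hd0) H0) as [del [Cd [Hdel [HCd Hbd]]]].
  set (K := (2 * ((2 * PI * INR (S q')) * (2 * PI * INR (S q'))) * (Rr + Rr ^ (S (S q')))
          + Cd ^ (S (S q')) * Rr ^ (S (S q')) * (Rr + 1) * Mg
          + Cd * (Rr * Rr + Rr ^ (S (S q'))) * LV * (6 * PI))%R).
  assert (HPI : 0 < PI) by apply PI_RGT_0.
  assert (HRr : 1 <= Rr) by (unfold Rr; lra).
  assert (HqR : 1 <= INR (S q')) by (apply (le_INR 1); lia).
  assert (HK : 0 <= K).
  { unfold K. pose proof (pow_le Rr (S (S q'))). pose proof (pow_le Cd (S (S q'))).
    assert (0 <= 2 * ((2 * PI * INR (S q')) * (2 * PI * INR (S q'))) * (Rr + Rr ^ (S (S q')))) by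
      (apply Rmult_le_pos; [nra|lra]).
    assert (0 <= Cd ^ (S (S q')) * Rr ^ (S (S q')) * (Rr + 1) * Mg).
    { apply Rmult_le_pos; [|lra]. apply Rmult_le_pos; [|lra]. apply Rmult_le_pos; lra. }
    assert (0 <= Cd * (Rr * Rr + Rr ^ (S (S q'))) * LV * (6 * PI)).
    { apply Rmult_le_pos; [|lra]. apply Rmult_le_pos; [|lra]. apply Rmult_le_pos; nra. }
    lra. }
  set (s := Rmin (Rmin (Rmin del r0) (Rmin 1 (/ ((Cd + 1) * Rr))))
                 (Rmin (/ (2 * PI * INR (S q') + 1)) (eta / (K + 1)))).
  assert (Hs1 : s <= del /\ s <= r0 /\ s <= 1 /\ s <= (/ ((Cd + 1) * Rr)) /\ s <= (/ (2 * PI * INR (S q') + 1)) /\ s <= eta / (K + 1)).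
  { unfold s.
    pose proof (Rmin_l del r0). pose proof (Rmin_r del r0).
    pose proof (Rmin_l 1 (/ ((Cd + 1) * Rr))). pose proof (Rmin_r 1 (/ ((Cd + 1) * Rr))).
    pose proof (Rmin_l (/ (2 * PI * INR (S q') + 1)) (eta / (K + 1))).
    pose proof (Rmin_r (/ (2 * PI * INR (S q') + 1)) (eta / (K + 1))).
    pose proof (Rmin_l (Rmin (Rmin del r0) (Rmin 1 (/ ((Cd + 1) * Rr)))) (Rmin (/ (2 * PI * INR (S q') + 1)) (eta / (K + 1)))).
    pose proof (Rmin_r (Rmin (Rmin del r0) (Rmin 1 (/ ((Cd + 1) * Rr)))) (Rmin (/ (2 * PI * INR (S q') + 1)) (eta / (K + 1)))).
    pose proof (Rmin_l (Rmin del r0) (Rmin 1 (/ ((Cd + 1) * Rr)))).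
    pose proof (Rmin_r (Rmin del r0) (Rmin 1 (/ ((Cd + 1) * Rr)))).
    repeat split; lra. }
  assert (Hs0 : 0 < s).
  { unfold s. repeat apply Rmin_glb_lt; try lra.
    apply Rinv_0_lt_compat; nra. apply Rinv_0_lt_compat; nra. apply Rdiv_lt_0_compat; lra. }
  exists (s ^ (S q')). split; [apply pow_lt; lra|].
  intros eps Heps Hepss z [d [Hdr [Hdq Hz]]] w Hw.
  replace (IZR p / INR (S q') + eps - IZR p / INR (S q'))%R with eps in Hdq by ring.
  destruct Hs1 as [Hsdel [Hsr0 [Hs1' [HsCd [Hspi Hseta]]]]].
  assert (Hdm : Cmod d ^ (S q') = Rabs eps) by (rewrite <- Cmod_pow, Hdq, Cmod_R; reflexivity).
  assert (Hds : Cmod d < s).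
  { apply (pow_lt_inv _ _ (S q')); [apply Cmod_ge_0|lra|rewrite Hdm; exact Hepss]. }
  pose proof (Rabs_pos_lt eps Heps) as Hae.
  assert (Hdpos : 0 < Cmod d).
  { destruct (Cmod_ge_0 d) as [H|H]; auto. rewrite <- H, pow_i in Hdm by lia. lra. }
  assert (Heps_d : Rabs eps <= Cmod d).
  { assert (Hd1 : 0 <= Cmod d <= 1) by (split; [apply Cmod_ge_0|lra]).
    rewrite <- Hdm. simpl. pose proof (pow_le_one' (Cmod d) q' Hd1).
    pose proof (Cmod_ge_0 d). nra. }
  destruct (Hcyc d (conj Hdpos Hdr)) as [Hznz [Hcy _]].
  subst z.
  assert (Hzb : Cmod (chi d) <= Cd * Cmod d) by (apply Hbd; lra).
  pose proof (cycle_iter p (S q') chi d Hcy (S q') (le_n _)) as Hit.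
  fold l0 in Hit. rewrite Hl0q, Cmult_1_l, Hdq, <- RtoC_plus in Hit.
  set (lam := cexp (Cmult (Cmult (RtoC (2 * PI)) Ci) (RtoC (IZR p / INR (S q') + eps)))).
  assert (Elam : lam = E (2 * PI * (IZR p / INR (S q') + eps))) by apply cexp_iR.
  change (Nat.iter (S q') (fl lam) (chi d) = chi d) in Hit.
  rewrite T_V in Hit.
  set (th := (2 * PI * INR (S q') * eps)%R).
  assert (EL : Cpow lam (S q') = E th).
  { rewrite Elam, E_pow.
    replace (INR (S q') * (2 * PI * (IZR p / INR (S q') + eps)))%R with (2 * PI * IZR p + th)%R
      by (unfold th; field; auto).
    rewrite <- E_mul, E_2piZ, Cmult_1_l. reflexivity. }
  assert (Elam0 : lam = Cmult l0 (E (2 * PI * eps))).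
  { rewrite Elam, El0, E_mul. f_equal. ring. }
  assert (Hlamm : Cmod lam = 1) by (rewrite Elam; apply Cmod_E).
  assert (Hme : Rabs eps * (2 * PI * INR (S q') + 1) < 1).
  { assert (HX : 0 < 2 * PI * INR (S q') + 1) by nra.
    assert (Rabs eps < / (2 * PI * INR (S q') + 1)) by lra.
    apply Rmult_lt_compat_r with (r := (2 * PI * INR (S q') + 1)) in H; [|exact HX].
    rewrite Rinv_l in H by lra. exact H. }
  assert (Hpe : Rabs (2 * PI * eps) <= 1).
  { rewrite Rabs_mult, (Rabs_pos_eq (2 * PI)) by lra. nra. }
  assert (Hth : Rabs th <= 1).
  { unfold th. rewrite Rabs_mult, (Rabs_pos_eq (2 * PI * INR (S q'))) by nra. nra. }
  assert (Hll : Cmod (Cminus lam l0) <= 6 * PI * Rabs eps).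
  { rewrite Elam0. replace (Cminus (Cmult l0 (E (2 * PI * eps))) l0) with (Cmult l0 (Cminus (E (2 * PI * eps)) (RtoC 1))) by ring.
    rewrite Cmod_mult, Hl0m, Rmult_1_l. eapply Rle_trans; [apply E_bound1; exact Hpe|].
    rewrite Rabs_mult, (Rabs_pos_eq (2 * PI)) by lra. lra. }
  set (zz := chi d) in *.
  assert (HsR : s * ((Cd + 1) * Rr) <= 1).
  { assert (HX : 0 < (Cd + 1) * Rr) by nra.
    apply Rmult_le_compat_r with (r := ((Cd + 1) * Rr)) in HsCd; [|lra].
    rewrite Rinv_l in HsCd by lra. exact HsCd. }
  assert (Hz1 : Cmod zz * Rr <= 1).
  { assert (Cmod zz <= Cd * s) by (eapply Rle_trans; [exact Hzb|]; apply Rmult_le_compat_l; lra).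
    pose proof (Cmod_ge_0 zz). nra. }
  assert (Hw' : Cmod w <= Rr) by (unfold Rr; lra).
  assert (Hzw : Cmod (Cmult zz w) <= 1).
  { rewrite Cmod_mult. pose proof (Cmod_ge_0 zz). pose proof (Cmod_ge_0 w). nra. }
  assert (Hz1' : Cmod zz <= 1) by (pose proof (Cmod_ge_0 zz); nra).
  unfold Rrem. rewrite Q_iter by auto.
  change (Nat.iter (S q') (Pmap (RtoC (IZR p / INR (S q') + eps))) (Cmult zz w)) with
    (Nat.iter (S q') (fl lam) (Cmult zz w)).
  rewrite T_V. fold th.
  set (A := V (S q') lam (Cmult zz w)). set (B := V (S q') lam zz).
  set (A0 := V (S q') l0 (Cmult zz w)). set (B0 := V (S q') l0 zz).
  set (L := Cpow lam (S q')) in *. set (I := Cmult (RtoC th) Ci).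
  assert (HA0 : A0 = Cmult (Cmult (Cpow zz q') (Cpow w q')) (r (Cmult zz w))).
  { unfold A0. rewrite Er, Cpow_mult_l. reflexivity. }
  assert (HB0 : B0 = Cmult (Cpow zz q') (r zz)) by (unfold B0; apply Er).
  pose proof (core_identity q' L I zz w A B A0 B0 (r (Cmult zz w)) (r zz) Hznz Hit HA0 HB0) as Hid.
  match goal with |- context [Cdiv ?X _] => replace X with
    (L * w + zz * w * w * A - w - I * w * (1 - w * Cpow w q'))%C end.
  2: { change (Cpow w (S q')) with (Cmult w (Cpow w q')). unfold I. field. exact Hznz. }
  rewrite Hid. clear Hid.
  assert (He0 : RtoC eps <> RtoC 0) by (intro H; apply (f_equal Cmod) in H; rewrite Cmod_R, Cmod_0 in H; lra).
  rewrite Cmod_div by exact He0. rewrite Cmod_R.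
  set (P2 := Rr ^ S (S q')).
  assert (HP2 : 1 <= P2) by (unfold P2; apply pow_R1_Rle; lra).
  set (dd := Cmod d) in *. set (ae := Rabs eps) in *.
  assert (Hdd0 : 0 <= dd) by lra.
  assert (Hwp : Cmod (Cmult (Cmult w w) (Cpow w q')) <= P2) by (apply Cmod_wpow; exact Hw').
  assert (HT1 : Cmod ((L - 1 - I) * (w - w * w * Cpow w q'))%C <=
      (2 * ((2 * PI * INR (S q')) * (2 * PI * INR (S q'))) * (Rr + P2)) * (dd * ae)).
  { rewrite Cmod_mult.
    assert (H1 : Cmod (L - 1 - I)%C <= 2 * (th * th)) by (rewrite EL; apply E_bound2; exact Hth).
    assert (H2 : Cmod (w - w * w * Cpow w q')%C <= Rr + P2) by (eapply Rle_trans; [apply Cmod_sub_le|]; lra).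
    assert (H3 : th * th <= (2 * PI * INR (S q')) * (2 * PI * INR (S q')) * (dd * ae)).
    { unfold th. replace (2 * PI * INR (S q') * eps * (2 * PI * INR (S q') * eps))%R
        with ((2 * PI * INR (S q')) * (2 * PI * INR (S q')) * (eps * eps))%R by ring.
      apply Rmult_le_compat_l; [nra|].
      assert (eps * eps = ae * ae)%R by (unfold ae; rewrite <- Rabs_mult, Rabs_pos_eq; nra).
      rewrite H. apply Rmult_le_compat_r; lra. }
    pose proof (Cmod_ge_0 (L - 1 - I)%C). pose proof (Cmod_ge_0 (w - w * w * Cpow w q')%C).
    apply Rle_trans with ((2 * (th * th)) * (Rr + P2)); [apply Rmult_le_compat; lra|].
    assert (0 <= Rr + P2) by lra. nra. }
  assert (Hzd : Cmod zz <= Cd * dd) by exact Hzb.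
  pose proof (Cmod_ge_0 zz) as Hzz0.
  assert (Hzq : Cmod (zz * Cpow zz q')%C <= Cd ^ (S q') * ae).
  { replace (Cmod (zz * Cpow zz q')%C) with (Cmod zz ^ (S q')) by (rewrite Cmod_mult, Cmod_pow; reflexivity).
    rewrite <- Hdm. rewrite <- Rpow_mult_distr. apply pow_incr; lra. }
  assert (Hrd : Cmod (r (zz * w) - r zz)%C <= Cd * dd * ((Rr + 1) * Mg)).
  { rewrite !Eg. replace (c + zz * w * g (zz * w) - (c + zz * g zz))%C with (zz * (w * g (zz * w) - g zz))%C by ring.
    rewrite Cmod_mult. apply Rmult_le_compat; [lra|apply Cmod_ge_0|lra|].
    eapply Rle_trans; [apply Cmod_sub_le|]. rewrite Cmod_mult.
    pose proof (HMg _ Hzw). pose proof (HMg _ Hz1'). pose proof (Cmod_ge_0 w). pose proof (Cmod_ge_0 (g (zz * w)%C)).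
    assert (Cmod w * Cmod (g (zz * w)%C) <= Rr * Mg) by (apply Rmult_le_compat; lra). nra. }
  assert (HT2 : Cmod (zz * Cpow zz q' * (w * w * Cpow w q') * (r (zz * w) - r zz))%C <=
      (Cd ^ (S (S q')) * P2 * (Rr + 1) * Mg) * (dd * ae)).
  { rewrite (Cmod_mult (zz * Cpow zz q' * _)), (Cmod_mult (zz * Cpow zz q')).
    pose proof (Cmod_ge_0 (zz * Cpow zz q')%C). pose proof (Cmod_ge_0 (w * w * Cpow w q')%C).
    pose proof (Cmod_ge_0 (r (zz * w) - r zz)%C).
    apply Rle_trans with ((Cd ^ (S q') * ae) * P2 * (Cd * dd * ((Rr + 1) * Mg))).
    { apply Rmult_le_compat; try nra; try (apply Rmult_le_compat; nra). }
    right. simpl. ring. }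
  assert (HlamL : Cmod lam <= 1) by lra. assert (Hl0L : Cmod l0 <= 1) by lra.
  assert (HA : Cmod (A - A0)%C <= LV * (6 * PI * ae)).
  { destruct (HV lam l0 (zz * w)%C HlamL Hl0L Hzw) as [_ H]. eapply Rle_trans; [exact H|].
    apply Rmult_le_compat_l; lra. }
  assert (HB : Cmod (B - B0)%C <= LV * (6 * PI * ae)).
  { destruct (HV lam l0 zz HlamL Hl0L Hz1') as [_ H]. eapply Rle_trans; [exact H|].
    apply Rmult_le_compat_l; lra. }
  assert (HT3 : Cmod (zz * (w * w * (A - A0) - w * w * Cpow w q' * (B - B0)))%C <=
      (Cd * (Rr * Rr + P2) * LV * (6 * PI)) * (dd * ae)).
  { rewrite Cmod_mult.
    assert (H1 : Cmod (w * w * (A - A0))%C <= Rr * Rr * (LV * (6 * PI * ae))).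
    { rewrite !Cmod_mult. pose proof (Cmod_ge_0 w). pose proof (Cmod_ge_0 (A - A0)%C).
      apply Rmult_le_compat; try nra. }
    assert (H2 : Cmod (w * w * Cpow w q' * (B - B0))%C <= P2 * (LV * (6 * PI * ae))).
    { rewrite (Cmod_mult (w * w * Cpow w q')). apply Rmult_le_compat; auto; apply Cmod_ge_0. }
    assert (H3 : Cmod (w * w * (A - A0) - w * w * Cpow w q' * (B - B0))%C <= (Rr * Rr + P2) * (LV * (6 * PI * ae)))
      by (eapply Rle_trans; [apply Cmod_sub_le|]; lra).
    apply Rle_trans with ((Cd * dd) * ((Rr * Rr + P2) * (LV * (6 * PI * ae)))).
    { apply Rmult_le_compat; auto; apply Cmod_ge_0. }
    right. ring. }
  assert (Htot : Cmod ((L - 1 - I) * (w - w * w * Cpow w q') + zz * Cpow zz q' * (w * w * Cpow w q') * (r (zz * w) - r zz)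
     + zz * (w * w * (A - A0) - w * w * Cpow w q' * (B - B0)))%C <= K * (dd * ae)).
  { eapply Rle_trans; [apply Cmod_triangle|]. eapply Rle_trans; [apply Rplus_le_compat_r, Cmod_triangle|].
    unfold K. fold P2. lra. }
  apply Rle_lt_trans with (K * (dd * ae) / ae).
  { unfold Rdiv. apply Rmult_le_compat_r; [apply Rlt_le, Rinv_0_lt_compat; lra| exact Htot]. }
  replace (K * (dd * ae) / ae) with (K * dd) by (field; lra).
  apply Rle_lt_trans with (K * (eta / (K + 1))).
  { apply Rmult_le_compat_l; lra. }
  replace (K * (eta / (K + 1))) with (eta - eta / (K + 1)) by (field; lra).
  assert (0 < eta / (K + 1)) by (apply Rdiv_lt_0_compat; lra). lra.
Qed.
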